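(* Fix $\varepsilon>0$ and consider the $q$-stage multistep Frank–Wolfe method (defined in the context) applied to minimizing over $[-1,1]$ the function $f(\mathbf x)=\mathbf x^2/2$ if $|\mathbf x|<\varepsilon$, $\varepsilon\mathbf x-\varepsilon^2/2$ if $\mathbf x\ge\varepsilon$, $-\varepsilon\mathbf x-\varepsilon^2/2$ if $\mathbf x\le-\varepsilon$, with $\mathrm{LMO}(\mathbf x)=-\mathrm{sign}(\mathbf x)$ and $\mathbf x_0=1$. Assume $0<q\mathbf P^{(k)}\beta<1$ entrywise for all $k$. Then there exist a finite $\tilde k$ and a constant $C_2\ge0$ such that $|\mathbf x_k|\le\frac{C_2}{k}$ for all $k>\tilde k$.
   Context: The method has parameters $A\in\mathbb R^{q\times q}$ strictly lower triangular, $\beta\in\mathbb R^q$ with $\sum_i\beta_i=1$, $\omega\in\mathbb R^q$ with $\omega_1=0$, $c>0$; given $\mathbf x_k$ it computes for $i=1,\dots,q$: $\bar{\mathbf x}_i=\mathbf x_k+\sum_jA_{ij}\xi_j$, $\xi_i=\frac{c}{c+k+\omega_i}(\mathrm{LMO}(\bar{\mathbf x}_i)-\bar{\mathbf x}_i)$, and $\mathbf x_{k+1}=\mathbf x_k+\sum_i\beta_i\xi_i$. Here $\Gamma^{(k)}=\mathrm{diag}\big(\frac{c}{c+k+\omega_i}\big)$ and $\mathbf P^{(k)}=\Gamma^{(k)}(I+A^T\Gamma^{(k)})^{-1}$. *)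

(* Defs.v *)
From HB Require Import structures.
From mathcomp Require Import all_boot all_order all_algebra.
Set Implicit Arguments. Unset Strict Implicit. Unset Printing Implicit Defensive.
Import Order.TTheory GRing.Theory Num.Theory.
Local Open Scope ring_scope.

Section MFW.
Variable R : realFieldType.

Definition fhub (eps x : R) : R :=
  if `|x| < eps then x ^+ 2 / 2
  else if eps <= x then eps * x - eps ^+ 2 / 2
  else - eps * x - eps ^+ 2 / 2.

Definition LMO (x : R) : R := - Num.sg x.

Variable q : nat.

(* nat-indexed access to matrix entries (0 outside the range). *)
Definition mxat (A : 'M[R]_q) (i j : nat) : R :=
  match insub i, insub j with
  | Some i', Some j' => A i' j'
  | _, _ => 0
  end.

Definition vat (v : 'I_q -> R) (i : nat) : R :=
  match insub i with Some i' => v i' | None => 0 end.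

Definition gam (c : R) (om : 'I_q -> R) (k : nat) (i : 'I_q) : R :=
  c / (c + k%:R + om i).

Definition Gam (c : R) (om : 'I_q -> R) (k : nat) : 'M[R]_q :=
  diag_mx (\row_i gam c om k i).

Definition Pk (A : 'M[R]_q) (c : R) (om : 'I_q -> R) (k : nat) : 'M[R]_q :=
  Gam c om k *m invmx (1%:M + A^T *m Gam c om k).

(* The stages xi_0, ..., xi_{n-1} at iteration k from point x:
   xbar_i = x + sum_{j<i} A_ij xi_j  (A strictly lower triangular),
   xi_i   = Gamma^(k)_i (LMO(xbar_i) - xbar_i). *)
Fixpoint xis (A : 'M[R]_q) (c : R) (om : 'I_q -> R) (k : nat) (x : R) (n : nat)
  : seq R :=
  match n with
  | 0 => [::]
  | n'.+1 =>
      let s := xis A c om k x n' in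
      let xb := x + \sum_(j < n') mxat A n' j * s`_j in
      rcons s (vat (gam c om k) n' * (LMO xb - xb))
  end.

Definition mfw_step (A : 'M[R]_q) (beta : 'cV[R]_q) (c : R) (om : 'I_q -> R)
  (k : nat) (x : R) : R :=
  x + \sum_(i < q) beta i 0 * (xis A c om k x q)`_i.

Fixpoint mfw_iter (A : 'M[R]_q) (beta : 'cV[R]_q) (c : R) (om : 'I_q -> R)
  (k : nat) : R :=
  match k with
  | 0 => 1
  | k'.+1 => mfw_step A beta c om k' (mfw_iter A beta c om k')
  end.

End MFW.

(* Main.v *)
Require Import Defs.
From HB Require Import structures.
From mathcomp Require Import all_boot all_order all_algebra ring lra zify.
From Stdlib Require Import Classical.
Import Order.TTheory GRing.Theory Num.Theory.
Local Open Scope ring_scope.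

Section Abs.
Variable R : realFieldType.
Hypothesis arch : forall r : R, exists n : nat, r < n%:R.
Variables (x rho : nat -> R) (D E kap : R) (K : nat).
Hypotheses (kap0 : 0 < kap) (D0 : 0 <= D) (E0 : 0 <= E).
Hypothesis xb1 : forall k, `|x k| <= 1.
Hypothesis rhoB : forall k, (K <= k)%N -> kap <= k%:R * rho k /\ k%:R * rho k <= E.
Hypothesis stepA : forall k, (K <= k)%N -> `|x k.+1| <= `|x k| + rho k.
Hypothesis stepB : forall k, (K <= k)%N -> D < k%:R * `|x k| ->
  `|x k.+1| <= `|x k| - rho k \/ `|x k.+1| <= rho k.

Let C := 2 * (D + E) + 1.

Lemma abs_main : exists kt C2, 0 <= C2 /\
  forall k, (kt < k)%N -> `|x k| <= C2 / k%:R.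
Proof.
have u0 := D0; have u1 := E0; have u2 := kap0.
have [N hN] := arch (C / kap).
pose K1 := (K + N).+1.
have K1K : (K <= K1)%N by rewrite /K1; lia.
have K1pos : (0 < K1)%N by [].
have CK1 : C <= kap * K1%:R.
  rewrite mulrC -ler_pdivrMr //; apply: (le_trans (ltW hN)); rewrite ler_nat /K1.
  lia.
have inv : forall k, (K1 <= k)%N -> k%:R * `|x k| <= C -> k.+1%:R * `|x k.+1| <= C.
  move=> k Kk hk.
  have kK : (K <= k)%N := leq_trans K1K Kk.
  have k1 : 1 <= k%:R :> R by rewrite ler1n (leq_trans K1pos Kk).
  have kC : C <= kap * k%:R.
    apply: (le_trans CK1); rewrite ler_pM2l // ler_nat //.
  have [r1 r2] := rhoB k kK.
  have r0 : 0 <= rho k.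
    by rewrite -(pmulr_rge0 _ (lt_le_trans ltr01 k1)); apply: le_trans (ltW kap0) r1.
  have xn := normr_ge0 (x k); have xn' := normr_ge0 (x k.+1).
  have -> : k.+1%:R = k%:R + 1 :> R by rewrite -addn1 natrD.
  case: (leP (k%:R * `|x k|) D) => hD.
    have h := stepA k kK.
    have h1 : (k%:R + 1) * `|x k.+1| <= (k%:R + 1) * (`|x k| + rho k).
      by rewrite ler_pM2l //; lra.
    have h2 : 0 <= (k%:R - 1) * (`|x k| + rho k) by apply: mulr_ge0; lra.
    rewrite /C; nra.
  case: (stepB k kK hD) => h.
    have h1 : (k%:R + 1) * `|x k.+1| <= (k%:R + 1) * (`|x k| - rho k).
      by rewrite ler_pM2l //; lra.
    have h3 : `|x k| <= kap.
      rewrite -(ler_pM2l (lt_le_trans ltr01 k1)); lra.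
    rewrite /C in hk *; nra.
  have h1 : (k%:R + 1) * `|x k.+1| <= (k%:R + 1) * rho k.
    by rewrite ler_pM2l //; lra.
  have h2 : 0 <= (k%:R - 1) * rho k by apply: mulr_ge0; lra.
  have t1 : (k%:R+1) * rho k <= 2*E by lra.
  have t0 := D0. rewrite /C; lra.
have C0 : 0 <= C by have t0 := D0; have t1 := E0; rewrite /C; lra.
have reach : exists k0, (K1 <= k0)%N /\ k0%:R * `|x k0| <= C.
  apply: NNPP => nex.
  have bigk : forall k, (K1 <= k)%N -> C < k%:R * `|x k|.
    move=> k Kk; rewrite ltNge; apply/negP => h; apply: nex; by exists k.
  have dec : forall k, (K1 <= k)%N -> `|x k.+1| <= `|x k| - rho k.
    move=> k Kk; have kK : (K <= k)%N := leq_trans K1K Kk.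
    have k1 : 1 <= k%:R :> R by rewrite ler1n (leq_trans K1pos Kk).
    have [r1 r2] := rhoB k kK.
    have hD : D < k%:R * `|x k| by have := bigk k Kk; rewrite /C; lra.
    case: (stepB k kK hD) => // h; exfalso.
    have := bigk k.+1 (leq_trans Kk (leqnSn k)).
    have -> : k.+1%:R = k%:R + 1 :> R by rewrite -addn1 natrD.
    have r0 : 0 <= rho k.
      by rewrite -(pmulr_rge0 _ (lt_le_trans ltr01 k1)); apply: le_trans (ltW kap0) r1.
    have h1 : (k%:R + 1) * `|x k.+1| <= (k%:R + 1) * rho k.
      by rewrite ler_pM2l //; lra.
    have h2 : 0 <= (k%:R - 1) * rho k by apply: mulr_ge0; lra.
    have t0 := D0; have t1 := E0.
    rewrite /C; lra.
  have dbl : forall m, (K1 <= m)%N -> forall n, (n <= m)%N ->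
      2 * m%:R * `|x (m + n)| <= 2 * m%:R * `|x m| - n%:R * kap.
    move=> m Km; elim => [_|n IH lnm]; first by rewrite addn0 mul0r subr0.
    have j1 : (K1 <= m + n)%N by apply: leq_trans Km (leq_addr _ _).
    have jK : (K <= m + n)%N := leq_trans K1K j1.
    have := dec _ j1; rewrite addnS => h.
    have [r1 _] := rhoB _ jK.
    have m0 : 0 < m%:R :> R by rewrite ltr0n (leq_trans K1pos Km).
    have jm : (m + n)%:R <= 2 * m%:R :> R.
      by rewrite -natrM ler_nat; lia.
    have r0 : 0 <= rho (m + n).
      rewrite -(pmulr_rge0 _ (_ : 0 < (m + n)%:R)); first by apply: le_trans (ltW kap0) r1.
      by rewrite ltr0n; lia.
    have h2 : (m + n)%:R * rho (m + n) <= 2 * m%:R * rho (m + n).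
      by apply: ler_wpM2r.
    have h3 : 2 * m%:R * `|x (m + n).+1| <= 2 * m%:R * (`|x (m + n)| - rho (m + n)).
      by rewrite ler_pM2l // mulr_gt0.
    have := IH (ltnW lnm); rewrite -addn1 natrD /=; nra.
  have half : forall m, (K1 <= m)%N -> `|x (m + m)| <= `|x m| - kap / 2.
    move=> m Km; have := dbl m Km m (leqnn m).
    have m0 : 0 < m%:R :> R by rewrite ltr0n (leq_trans K1pos Km).
    move=> h; rewrite -(ler_pM2l (_ : 0 < 2 * m%:R)) ?mulr_gt0 //.
    apply: (le_trans h); rewrite lerBlDr; rewrite [_ * (_ - _)]mulrBr.
    have -> : 2 * m%:R * (kap / 2) = m%:R * kap by field.
    lra.
  have iter : forall j, (K1 <= K1 * 2 ^ j)%N /\ `|x (K1 * 2 ^ j)| <= 1 - j%:R * kap / 2.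
    elim => [|j [Kj IH]].
      by rewrite expn0 muln1 leqnn mul0r mul0r subr0 xb1.
    have -> : (K1 * 2 ^ j.+1 = K1 * 2 ^ j + K1 * 2 ^ j)%N by rewrite expnS; lia.
    split; first by lia.
    have := half _ Kj; have -> : j.+1%:R = j%:R + 1 :> R by rewrite -addn1 natrD.
    lra.
  have [j hj] := arch (2 / kap).
  have [_ hx] := iter j; have := normr_ge0 (x (K1 * 2 ^ j)).
  have : 2 < j%:R * kap by rewrite -ltr_pdivrMr.
  lra.
case: reach => k0 [Kk0 h0].
exists k0, C; split => // k lk.
have key : forall n, (k0 + n)%:R * `|x (k0 + n)| <= C.
  elim => [|n IH]; first by rewrite addn0.
  rewrite addnS; apply: inv => //; exact: leq_trans Kk0 (leq_addr _ _).
have := key (k - k0)%N; rewrite subnKC ?(ltnW lk) // => h.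
have k0' : 0 < k%:R :> R by rewrite ltr0n (leq_ltn_trans (leq0n _) lk).
by rewrite ler_pdivlMr // mulrC.
Qed.
End Abs.

Section Alg.
Variable R : realFieldType.
Variable q : nat.
Variable A : 'M[R]_q.
Hypothesis hA : forall i j : 'I_q, (i <= j)%N -> A i j = 0.
Variable beta : 'cV[R]_q.
Variable c : R.
Variable om : 'I_q -> R.

Lemma size_xis k x n : size (xis A c om k x n) = n.
Proof. by elim: n => //= n IH; rewrite size_rcons IH. Qed.

Lemma nth_xis k x n m i : (i < n)%N -> (n <= m)%N ->
  (xis A c om k x m)`_i = (xis A c om k x n)`_i.
Proof.
move=> lin; elim: m => [|m IH]; first by rewrite leqn0 => /eqP ->.
rewrite leq_eqVlt => /orP [/eqP -> //|]; rewrite ltnS => lenm.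
by rewrite /= nth_rcons size_xis (leq_trans lin lenm) IH.
Qed.

Lemma mxatE (i j : 'I_q) : mxat A i j = A i j.
Proof. by rewrite /mxat !valK. Qed.

Lemma vatE (f : 'I_q -> R) (i : 'I_q) : vat f i = f i.
Proof. by rewrite /vat valK. Qed.

Definition xi k x (i : 'I_q) := (xis A c om k x q)`_i.
Definition xb k x (i : 'I_q) := x + \sum_(j < q) A i j * xi k x j.

Lemma xiE k x i : xi k x i = gam c om k i * (LMO (xb k x i) - xb k x i).
Proof.
rewrite /xi (nth_xis _ _ _ _ _ (ltnSn i) (ltn_ord i)) /= nth_rcons size_xis ltnn eqxx.
rewrite vatE /xb.
suff -> : \sum_(j < i) mxat A i j * (xis A c om k x i)`_j =
  \sum_(j < q) A i j * xi k x j by [].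
  set F := fun j : nat => mxat A i j * (xis A c om k x q)`_j.
  have -> : \sum_(j < q) A i j * xi k x j = \sum_(j < q) F j.
    by apply: eq_bigr => j _; rewrite /F mxatE.
  rewrite -(big_mkord xpredT F).
  rewrite (@big_cat_nat _ _ _ i) //=; last exact: ltnW.
  have -> : \sum_(i <= j < q) F j = 0.
    rewrite big_nat_cond big1 // => j; rewrite andbT => /andP [lij ljq].
    rewrite /F /mxat valK insubT /= hA ?mul0r //.
  rewrite addr0.
  rewrite big_mkord; apply: eq_bigr => j _.
  by rewrite /F (nth_xis _ _ _ _ _ (ltn_ord j) (ltnW (ltn_ord i))).
Qed.

Definition Mk k : 'M[R]_q := 1%:M + A^T *m Gam c om k.

Lemma MkE k i j : Mk k i j = (i == j)%:R + A j i * gam c om k j.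
Proof. by rewrite /Mk /Gam mul_mx_diag !mxE. Qed.

Lemma Mk_unit k : Mk k \in unitmx.
Proof.
rewrite unitmxE -det_tr det_trig.
  rewrite big1 ?unitr1 // => i _; rewrite mxE MkE hA // mul0r eqxx addr0 //.
apply/is_trig_mxP => i j lij; rewrite mxE MkE hA ?(ltnW lij) // mul0r addr0.
by case: eqP => // ji; rewrite ji ltnn in lij.
Qed.

Definition yk k := invmx (Mk k) *m beta.
Definition vk k i := (Pk A c om k *m beta) i 0.

Lemma vkE k i : vk k i = gam c om k i * yk k i 0.
Proof. by rewrite /vk /Pk -mulmxA /Gam mul_diag_mx !mxE. Qed.

Lemma ykE k i : beta i 0 = yk k i 0 + \sum_j A j i * gam c om k j * yk k j 0.
Proof.
have := mulKVmx (Mk_unit k) beta; rewrite -/(yk k) => /matrixP /(_ i 0).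
rewrite mxE => <-.
rewrite (bigD1 i) //= MkE eqxx mulrDl mul1r -addrA; congr (_ + _).
rewrite [X in _ = X](bigD1 i) //= hA // mul0r mul0r add0r.
rewrite add0r; apply: eq_bigr => j nji; by rewrite MkE eq_sym (negbTE nji) add0r mulrA.
Qed.

Lemma step_sum k x : \sum_i beta i 0 * xi k x i =
  - \sum_i vk k i * (Num.sg (xb k x i) + x).
Proof.
under eq_bigr do rewrite (ykE k) mulrDl big_distrl /=.
rewrite big_split /= exchange_big /= -big_split /= -sumrN.
apply: eq_bigr => j _.
have E : xi k x j + gam c om k j * \sum_i A j i * xi k x i =
   - (gam c om k j * (Num.sg (xb k x j) + x)).
  rewrite xiE /LMO /xb; set S := \sum_i _; ring.
rewrite vkE (mulrC (gam _ _ _ _)) -mulrA -mulrN -E mulrDr; congr (_ + _).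
rewrite !mulr_sumr; apply: eq_bigr => i _; ring.
Qed.

Definition rho k := \sum_i vk k i.

Lemma mfw_succ k :
  mfw_iter A beta c om k.+1 = (1 - rho k) * mfw_iter A beta c om k
     - \sum_i vk k i * Num.sg (xb k (mfw_iter A beta c om k) i).
Proof.
rewrite /= /mfw_step; set X := mfw_iter A beta c om k.
have -> : \sum_(i < q) beta i 0 * (xis A c om k X q)`_i = \sum_i beta i 0 * xi k X i by [].
rewrite step_sum.
have -> : \sum_i vk k i * (Num.sg (xb k X i) + X) =
  \sum_i vk k i * Num.sg (xb k X i) + \sum_i vk k i * X.
  by rewrite -big_split; apply: eq_bigr => i _; rewrite mulrDr.
by rewrite -mulr_suml /rho; ring.
Qed.

Lemma leTsum (F : 'I_q -> R) i : (forall j, 0 <= F j) -> F i <= \sum_j F j.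
Proof. by move=> h; rewrite (bigD1 i) //= lerDl sumr_ge0. Qed.

Lemma sg_same (a x : R) : `|a - x| < `|x| -> Num.sg a = Num.sg x.
Proof.
case: (ltrgt0P x) => hx.
- rewrite ltr_norml => /andP [h1 h2].
  by rewrite !gtr0_sg //; lra.
- rewrite ltr_norml => /andP [h1 h2].
  by rewrite !ltr0_sg //; lra.
- by move=> h; have := normr_ge0 (a - x); rewrite leNgt h.
Qed.

Section WithP.
Hypothesis hq : (0 < q)%N.
Hypothesis hv : forall k i, 0 < vk k i /\ q%:R * vk k i < 1.

Lemma rho_gt0 k : 0 < rho k.
Proof.
have i0 : 'I_q := Ordinal hq.
apply: (lt_le_trans (proj1 (hv k i0))); apply: leTsum => j.
exact: ltW (proj1 (hv k j)).
Qed.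

Lemma rho_lt1 k : rho k < 1.
Proof.
have q0 : 0 < q%:R :> R by rewrite ltr0n.
have i0 : 'I_q := Ordinal hq.
have h : 0 < \sum_i (1 - q%:R * vk k i).
  apply: (lt_le_trans _ (leTsum _ i0 _)).
    by have := proj2 (hv k i0); lra.
  by move=> j; have := proj2 (hv k j); lra.
move: h; rewrite sumrB sumr_const card_ord -mulr_sumr -/(rho k).
move=> h; rewrite -(ltr_pM2l q0) mulr1; lra.
Qed.

Lemma step_le k (X := mfw_iter A beta c om k) :
  `|mfw_iter A beta c om k.+1| <= (1 - rho k) * `|X| + rho k.
Proof.
rewrite mfw_succ -/X.
have r0 := rho_gt0 k; have r1 := rho_lt1 k.
apply: (le_trans (ler_normB _ _)); apply: lerD.
  by rewrite normrM ger0_norm //; lra.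
apply: (le_trans (ler_norm_sum _ _ _)); apply: ler_sum => i _.
rewrite normrM ger0_norm; last exact: ltW (proj1 (hv k i)).
rewrite normr_sg; have := proj1 (hv k i); case: (_ != 0); rewrite ?mulr1 ?mulr0 //.
by move=> /ltW.
Qed.

Lemma iter_le1 k : `|mfw_iter A beta c om k| <= 1.
Proof.
elim: k => [|k IH]; first by rewrite /= normr1.
apply: (le_trans (step_le k)); have r0 := rho_gt0 k; have r1 := rho_lt1 k.
nra.
Qed.

Lemma step_same k (X := mfw_iter A beta c om k) :
  X != 0 -> (forall i, Num.sg (xb k X i) = Num.sg X) ->
  `|mfw_iter A beta c om k.+1| <= `|X| - rho k \/
  `|mfw_iter A beta c om k.+1| <= rho k.
Proof.
move=> X0 hs; rewrite mfw_succ -/X.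
under eq_bigr do rewrite hs.
rewrite -mulr_suml -/(rho k).
have -> : (1 - rho k) * X - rho k * Num.sg X =
    Num.sg X * ((1 - rho k) * `|X| - rho k).
  by rewrite -{1}(mulr_sg_norm X); ring.
rewrite normrM normr_sg X0 mul1r.
have r0 := rho_gt0 k; have r1 := rho_lt1 k; have := normr_ge0 X.
case: (lerP 0 ((1 - rho k) * `|X| - rho k)) => h.
  by rewrite ger0_norm //; left; nra.
by rewrite ltr0_norm //; right; nra.
Qed.

Lemma sum_wb (w z : 'I_q -> R) :
  `|\sum_j w j * z j| <= (\sum_j `|w j|) * (\sum_j `|z j|).
Proof.
apply: (le_trans (ler_norm_sum _ _ _)); rewrite mulr_suml; apply: ler_sum => j _.
rewrite normrM; apply: ler_wpM2l => //; apply: leTsum => i; exact: normr_ge0.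
Qed.

Definition alpha := \sum_i \sum_j `|A i j|.
Definition bnorm := \sum_i `|beta i 0|.
Definition gs k := \sum_i `|gam c om k i|.

Lemma alpha_ge0 : 0 <= alpha.
Proof. by apply: sumr_ge0 => i _; apply: sumr_ge0. Qed.
Lemma bnorm_ge0 : 0 <= bnorm.
Proof. by apply: sumr_ge0. Qed.
Lemma gs_ge0 k : 0 <= gs k.
Proof. by apply: sumr_ge0. Qed.

Lemma row_le_alpha i : \sum_j `|A i j| <= alpha.
Proof. by apply: leTsum => j; apply: sumr_ge0. Qed.

Lemma col_le_alpha i : \sum_j `|A j i| <= alpha.
Proof.
rewrite /alpha exchange_big /=; apply: leTsum => j; exact: sumr_ge0.
Qed.

Lemma dev_bound k x i : `|xb k x i - x| <= alpha * \sum_j `|xi k x j|.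
Proof.
rewrite /xb addrC addKr; apply: (le_trans (sum_wb _ _)).
apply: ler_wpM2r; [exact: sumr_ge0 | exact: row_le_alpha].
Qed.

Lemma xi_bound k x : `|x| <= 1 -> gs k * alpha <= 1/2 ->
  \sum_j `|xi k x j| <= 4 * gs k.
Proof.
move=> hx hg; set Xi := \sum_j `|xi k x j|.
have Xi0 : 0 <= Xi by exact: sumr_ge0.
have a0 := alpha_ge0; have g0 := gs_ge0 k.
have h : Xi <= gs k * (2 + alpha * Xi).
  rewrite /Xi /gs mulr_suml; apply: ler_sum => i _.
  rewrite xiE normrM; apply: ler_wpM2l => //.
  rewrite /LMO; have := dev_bound k x i; rewrite -/Xi.
  set S := xb k x i.
  have -> : - Num.sg S - S = - (Num.sg S + x + (S - x)) by ring.
  rewrite normrN => hd; apply: (le_trans (ler_normD _ _)).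
  apply: lerD; last exact: hd.
  apply: (le_trans (ler_normD _ _)); rewrite normr_sg.
  by case: (_ != 0); rewrite /= ?mulr1n ?mulr0n; lra.
have h2 : gs k * alpha * Xi <= 1/2 * Xi by apply: ler_wpM2r.
nra.
Qed.

Lemma ykE' k i : yk k i 0 = beta i 0 - \sum_j A j i * (gam c om k j * yk k j 0).
Proof.
rewrite (ykE k i); under [X in _ = _ - X]eq_bigr do rewrite mulrA.
by rewrite addrK.
Qed.

Lemma y_bound k : gs k * alpha <= 1/2 -> \sum_i `|yk k i 0| <= 2 * bnorm.
Proof.
move=> hg; set Y := \sum_i `|yk k i 0|.
set W := \sum_j `|gam c om k j * yk k j 0|.
have Y0 : 0 <= Y by exact: sumr_ge0.
have a0 := alpha_ge0; have g0 := gs_ge0 k.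
have hW : W <= gs k * Y.
  rewrite /W /gs mulr_suml; apply: ler_sum => j _; rewrite normrM.
  apply: ler_wpM2l => //; apply: leTsum => i; exact: normr_ge0.
have h : Y <= bnorm + alpha * W.
  have -> : alpha = \sum_i \sum_j `|A j i| by rewrite /alpha exchange_big.
  rewrite /Y /bnorm mulr_suml -big_split /=; apply: ler_sum => i _.
  rewrite ykE'; apply: (le_trans (ler_normB _ _)); apply: lerD => //.
  exact: (sum_wb (fun j => A j i)).
have h2 : alpha * W <= alpha * (gs k * Y) by apply: ler_wpM2l.
have h3 : gs k * alpha * Y <= 1/2 * Y by apply: ler_wpM2r.
nra.
Qed.

Lemma rho_upper k : gs k * alpha <= 1/2 -> rho k <= 2 * bnorm * gs k.
Proof.
move=> hg; have := y_bound k hg; set Y := \sum_i `|yk k i 0| => hY.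
apply: (le_trans (ler_norm _)).
have -> : rho k = \sum_j gam c om k j * yk k j 0.
  by apply: eq_bigr => j _; rewrite vkE.
apply: (le_trans (sum_wb _ _)); rewrite -/(gs k) -/Y.
have g0 := gs_ge0 k; rewrite mulrC; apply: ler_wpM2r => //.
Qed.

Lemma rho_lower k : gs k * alpha <= 1/2 ->
  \sum_i gam c om k i * beta i 0 - 2 * alpha * bnorm * gs k ^+ 2 <= rho k.
Proof.
move=> hg; have := y_bound k hg; set Y := \sum_i `|yk k i 0| => hY.
set W := \sum_j `|gam c om k j * yk k j 0|.
have Y0 : 0 <= Y by exact: sumr_ge0.
have a0 := alpha_ge0; have g0 := gs_ge0 k; have b0 := bnorm_ge0.
have hW : W <= gs k * Y.
  rewrite /W /gs mulr_suml; apply: ler_sum => j _; rewrite normrM.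
  apply: ler_wpM2l => //; apply: leTsum => i; exact: normr_ge0.
have -> : rho k = \sum_i gam c om k i * beta i 0 -
    \sum_i gam c om k i * (\sum_j A j i * (gam c om k j * yk k j 0)).
  rewrite -sumrB; apply: eq_bigr => i _; rewrite vkE ykE'; ring.
have : `|\sum_i gam c om k i * (\sum_j A j i * (gam c om k j * yk k j 0))|
    <= gs k * (alpha * W).
  apply: (le_trans (ler_norm_sum _ _ _)); rewrite /gs mulr_suml.
  apply: ler_sum => i _; rewrite normrM; apply: ler_wpM2l => //.
  apply: (le_trans (sum_wb _ _)); rewrite -/W.
  apply: ler_wpM2r; first exact: sumr_ge0.
  exact: col_le_alpha.
move=> h.
have h1 : alpha * W <= alpha * (gs k * Y) by apply: ler_wpM2l.
have h2 : gs k * (alpha * W) <= gs k * (alpha * (gs k * Y)) by apply: ler_wpM2l.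
have h3 : gs k * (alpha * (gs k * Y)) <= gs k * (alpha * (gs k * (2 * bnorm))).
  by apply: ler_wpM2l => //; apply: ler_wpM2l => //; apply: ler_wpM2l.
have := ler_norm (\sum_i gam c om k i * (\sum_j A j i * (gam c om k j * yk k j 0))).
rewrite expr2; nra.
Qed.

Definition Dl := \sum_i `|c + om i|.
Lemma Dl_ge0 : 0 <= Dl. Proof. exact: sumr_ge0. Qed.

Lemma gam_b k i : 0 < c -> 1 <= k%:R :> R -> 2 * Dl <= k%:R ->
  [/\ 0 <= gam c om k i, k%:R * gam c om k i <= 2 * c &
      k%:R * `|k%:R * gam c om k i - c| <= 2 * c * Dl].
Proof.
move=> c0 k1 kD.
have hd : `|c + om i| <= Dl by apply: leTsum => j; exact: normr_ge0.
have hn := ler_norm (- (c + om i)); rewrite normrN in hn.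
have hn' := normr_ge0 (c + om i).
rewrite /gam; set den := c + k%:R + om i.
have hden : k%:R <= 2 * den by rewrite /den; lra.
have den0 : 0 < den by lra.
split.
- by apply: divr_ge0; lra.
- rewrite mulrA ler_pdivrMr //; nra.
have -> : k%:R * (c / den) - c = - (c * (c + om i)) / den.
  rewrite /den; field; rewrite -/den; exact: lt0r_neq0.
rewrite normrM normrN normrM (gtr0_norm c0) (ger0_norm (_ : 0 <= den^-1)); last by rewrite invr_ge0 ltW.
rewrite mulrA ler_pdivrMr //.
have h1 : c * `|c + om i| <= c * Dl by apply: ler_wpM2l => //; exact: ltW.
have h2 : 0 <= (2 * den - k%:R) * (c * `|c + om i|).
  by apply: mulr_ge0; [lra | apply: mulr_ge0 => //; exact: ltW].
have h3 : 0 <= den * (c * Dl - c * `|c + om i|) by apply: mulr_ge0; lra.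
nra.
Qed.

Lemma final_arch (hc : 0 < c) (hbeta : \sum_i beta i 0 = 1)
  (arch : forall r : R, exists n : nat, r < n%:R) :
  exists (kt : nat) (C2 : R), 0 <= C2 /\
    forall k : nat, (kt < k)%N -> `|mfw_iter A beta c om k| <= C2 / k%:R.
Proof.
set G := 2 * c * q%:R.
set Q := 2 * c * Dl * bnorm + 2 * alpha * bnorm * G ^+ 2.
have a0 := alpha_ge0; have b0 := bnorm_ge0; have d0 := Dl_ge0.
have G0 : 0 <= G by rewrite /G; apply: mulr_ge0 => //; apply: mulr_ge0 => //; exact: ltW.
have Q0 : 0 <= Q.
  rewrite /Q; apply: addr_ge0; apply: mulr_ge0 => //; apply: mulr_ge0 => //;
  apply: mulr_ge0 => //; exact: ltW.
have [K hK] := arch (1 + 2 * Dl + 2 * alpha * G + 2 * Q / c).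
have Qc : 0 <= 2 * Q / c by apply: divr_ge0 => //; [lra|exact: ltW].
have Kbig : forall k, (K <= k)%N ->
   [/\ 1 <= k%:R :> R, 2 * Dl <= k%:R, 2 * alpha * G <= k%:R & 2 * Q <= c * k%:R].
  move=> k Kk; have : K%:R <= k%:R :> R by rewrite ler_nat.
  move=> h; have aG : 0 <= 2 * alpha * G by apply: mulr_ge0 => //; lra.
  split; try lra.
  rewrite -ler_pdivrMl // mulrC; lra.
have gsb : forall k, (K <= k)%N -> k%:R * gs k <= G.
  move=> k /Kbig [k1 kD _ _]; rewrite /gs mulr_sumr.
  have -> : G = \sum_(i < q) 2 * c by rewrite sumr_const card_ord /G mulr_natr.
  apply: ler_sum => i _; have [g0 g1 _] := gam_b k i hc k1 kD.
  by rewrite ger0_norm.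
have gsa : forall k, (K <= k)%N -> gs k * alpha <= 1/2.
  move=> k Kk; have [k1 _ kaG _] := Kbig k Kk; have := gsb k Kk.
  have := gs_ge0 k => g0 h.
  have h2 : k%:R * gs k * alpha <= G * alpha by apply: ler_wpM2r.
  rewrite -(ler_pM2l (_ : 0 < k%:R)); last by lra.
  nra.
apply: (@abs_main R arch (mfw_iter A beta c om) rho (4 * alpha * G) (2 * bnorm * G) (c / 2) K).
- by apply: divr_gt0.
- by apply: mulr_ge0 => //; apply: mulr_ge0 => //.
- by apply: mulr_ge0 => //; apply: mulr_ge0 => //.
- exact: iter_le1.
- move=> k Kk; have [k1 kD kaG kQ] := Kbig k Kk.
  have hg := gsa k Kk; have hgs := gsb k Kk; have g0 := gs_ge0 k.
  split; last first.
    have := rho_upper k hg => h.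
    have : k%:R * rho k <= k%:R * (2 * bnorm * gs k) by apply: ler_wpM2l => //; lra.
    have : 2 * bnorm * (k%:R * gs k) <= 2 * bnorm * G by apply: ler_wpM2l => //; lra.
    lra.
  have hl := rho_lower k hg.
  have hs : k%:R * `|k%:R * \sum_i gam c om k i * beta i 0 - c| <= 2 * c * Dl * bnorm.
    have -> : k%:R * \sum_i gam c om k i * beta i 0 - c =
        \sum_i (k%:R * gam c om k i - c) * beta i 0.
      under [RHS]eq_bigr do rewrite mulrBl; rewrite sumrB.
      have -> : \sum_i c * beta i 0 = c by rewrite -mulr_sumr hbeta mulr1.
      rewrite mulr_sumr; congr (_ - _); apply: eq_bigr => i _; by rewrite mulrA.
    apply: (le_trans (ler_wpM2l (ltW (lt_le_trans ltr01 k1)) (ler_norm_sum _ _ _))).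
    rewrite mulr_sumr /bnorm mulr_sumr; apply: ler_sum => i _.
    have [_ _ g2] := gam_b k i hc k1 kD.
    rewrite normrM mulrA; apply: ler_wpM2r => //.
  have hk2 : 2 * alpha * bnorm * (k%:R * gs k) ^+ 2 <= 2 * alpha * bnorm * G ^+ 2.
    apply: ler_wpM2l; first by apply: mulr_ge0 => //; lra.
    by rewrite !expr2; apply: ler_pM => //; apply: mulr_ge0 => //; lra.
  set S := \sum_i gam c om k i * beta i 0 in hl hs *.
  have hS := ler_norm (- (k%:R * S - c)); rewrite normrN in hS.
  have e1 : k%:R * (k%:R * S - c) >= - (2 * c * Dl * bnorm) by nra.
  have kp : 0 < k%:R :> R by lra.
  rewrite -(ler_pM2l kp).
  have e2 : k%:R * (k%:R * (S - 2 * alpha * bnorm * gs k ^+ 2))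
         <= k%:R * (k%:R * rho k).
    by apply: ler_wpM2l; [lra | apply: ler_wpM2l; [lra | exact: hl]].
  rewrite /Q in kQ; rewrite expr2 in hk2 e2.
  nra.
- move=> k Kk; have h := step_le k; have r0 := rho_gt0 k.
  have xn := normr_ge0 (mfw_iter A beta c om k); move: h => /=; nra.
- move=> k Kk hD.
  have [k1 kD kaG kQ] := Kbig k Kk.
  have hg := gsa k Kk; have hgs := gsb k Kk; have g0 := gs_ge0 k.
  set X := mfw_iter A beta c om k in hD *.
  have kp : 0 < k%:R :> R by lra.
  have hX0 : 0 < `|X|.
    rewrite -(pmulr_rgt0 _ kp); apply: le_lt_trans hD.
    by apply: mulr_ge0 => //; apply: mulr_ge0 => //; lra.
  apply: step_same; first by rewrite -normr_gt0.
  move=> i; apply: sg_same.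
  have := dev_bound k X i; have := xi_bound k X (iter_le1 k) hg.
  set Xi := \sum_j _ => h1 h2.
  have h3 : alpha * Xi <= alpha * (4 * gs k) by apply: ler_wpM2l.
  rewrite -(ltr_pM2l kp).
  have h4 : k%:R * `|xb k X i - X| <= k%:R * (alpha * (4 * gs k)).
    by apply: ler_wpM2l; lra.
  have h5 : alpha * (k%:R * gs k) <= alpha * G by apply: ler_wpM2l.
  nra.
Qed.
End WithP.
End Alg.

Theorem lemma3 (R : realFieldType) (eps : R) (heps : 0 < eps)
  (q : nat) (hq : (0 < q)%N)
  (A : 'M[R]_q) (hA : forall i j : 'I_q, (i <= j)%N -> A i j = 0)
  (beta : 'cV[R]_q) (hbeta : \sum_(i < q) beta i 0 = 1)
  (om : 'I_q -> R) (hom : forall i : 'I_q, val i = 0%N -> om i = 0)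
  (c : R) (hc : 0 < c)
  (hP : forall (k : nat) (i : 'I_q),
      0 < (q%:R *: (Pk A c om k *m beta)) i 0 < 1) :
  exists (kt : nat) (C2 : R), 0 <= C2 /\
    forall k : nat, (kt < k)%N -> `|mfw_iter A beta c om k| <= C2 / k%:R.
Proof.
have q0 : 0 < q%:R :> R by rewrite ltr0n.
have hv : forall k i, 0 < @vk R q A beta c om k i /\ q%:R * @vk R q A beta c om k i < 1.
  move=> k i; have /andP [h1 h2] := hP k i; rewrite mxE in h1 h2.
  by split => //; rewrite -(pmulr_rgt0 _ q0).
case: (classic (forall r : R, exists n : nat, r < n%:R)) => [arch|narch].
  exact: (@final_arch R q A hA beta c om hq hv hc hbeta arch).
have [r hr] : exists r : R, forall n : nat, n%:R <= r.
  apply: NNPP => hn; apply: narch => r; apply: NNPP => hr; apply: hn.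
  by exists r => n; rewrite leNgt; apply/negP => h; apply: hr; exists n.
exists 0%N, r; split; first exact: (hr 0%N).
move=> k k0; have kp : 0 < k%:R :> R by rewrite ltr0n.
rewrite ler_pdivlMr //.
have := @iter_le1 R q A hA beta c om hq hv k => h.
apply: le_trans (hr k); rewrite -[X in _ <= X]mul1r; apply: ler_wpM2r => //.
Qed.
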